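(* Let $V_-\in\mathbb C(x)$, $\lambda_1\in\mathbb C$, and let $\Psi_{\lambda_1}$ be a nonzero solution of $-\partial_x^2\Psi+V_-\Psi=\lambda_1\Psi$ with $W:=-\partial_x(\ln\Psi_{\lambda_1})$ algebraic over $\mathbb C(x)$; let $V_+=V_--2\partial_x^2(\ln\Psi_{\lambda_1})$ (so that $V_\mp-\lambda_1=W^2\mp\partial_xW$). Then the following are equivalent: (i) $W\in\mathbb C(x)$; (ii) $V_+\in\mathbb C(x)$ and, for every $\lambda\ne\lambda_1$, the Picard–Vessiot extensions over $\mathbb C(x)$ of $-\partial_x^2\Psi+V_-\Psi=\lambda\Psi$ and of $-\partial_x^2\Psi+V_+\Psi=\lambda\Psi$ coincide.
   Context: Condition (ii) is what the paper calls the Darboux transformation being strong iso-Galoisian: same base field and same Picard–Vessiot extensions. *)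

(* Defs.v *)
From HB Require Import structures.
From mathcomp Require Import all_boot all_order all_algebra.
From mathcomp Require Import reals complex.
Set Implicit Arguments. Unset Strict Implicit. Unset Printing Implicit Defensive.
Import Order.TTheory GRing.Theory Num.Theory.
Local Open Scope ring_scope.

Definition ratfun (C : idomainType) := {fraction {poly C}}.

Definition ratC (C : idomainType) (c : C) : ratfun C := FracField.tofrac (c%:P).
Definition ratX (C : idomainType) : ratfun C := FracField.tofrac 'X.

Section Diff.
Variables (C : idomainType) (K : fieldType).

Definition derivation (D : K -> K) : Prop :=
  (forall a b, D (a + b) = D a + D b) /\
  (forall a b, D (a * b) = D a * b + a * D b).

(* (K, D) together with iota is a differential field extension of
   (C(x), d/dx): iota is a field embedding compatible with the derivations.
   (A derivation of C(x) killing C and sending x to 1 is d/dx.) *)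
Definition diff_ext_of_ratfun (D : K -> K) (iota : ratfun C -> K) : Prop :=
  derivation D /\
  (forall c : C, D (iota (ratC c)) = 0) /\
  D (iota (ratX C)) = 1.

Definition constants_are_C (D : K -> K) (iota : ratfun C -> K) : Prop :=
  forall a : K, D a = 0 -> exists c : C, a = iota (ratC c).

Definition schrod_sol (D : K -> K) (V lam y : K) : Prop :=
  - D (D y) + V * y = lam * y.

Definition wronskian (D : K -> K) (y1 y2 : K) : K := y1 * D y2 - D y1 * y2.

Definition has_fundamental_system (D : K -> K) (V lam : K) : Prop :=
  exists y1 y2, schrod_sol D V lam y1 /\ schrod_sol D V lam y2 /\
                wronskian D y1 y2 != 0.

Definition is_subfield (S : K -> Prop) : Prop :=
  S 0 /\ S 1 /\ (forall a b, S a -> S b -> S (a - b)) /\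
  (forall a b, S a -> S b -> S (a * b)) /\ (forall a, S a -> S (a^-1)).

Definition gen_subfield (A : K -> Prop) (x : K) : Prop :=
  forall S, is_subfield S -> (forall a, A a -> S a) -> S x.

(* When K has constants C and contains a fundamental system,
   this is the Picard-Vessiot extension of the equation (realised in K). *)
Definition PV_field (D : K -> K) (iota : ratfun C -> K) (V lam : K) : K -> Prop :=
  gen_subfield (fun a => (exists f, a = iota f) \/
                         exists y, schrod_sol D V lam y /\ (a = y \/ a = D y)).

Definition algebraic_over_ratfun (iota : {rmorphism ratfun C -> K}) (a : K) : Prop :=
  exists p : {poly ratfun C}, p != 0 /\ (map_poly iota p).[a] = 0.

End Diff.

(* Main.v *)
Require Import Defs.
From HB Require Import structures.
From mathcomp Require Import all_boot all_order all_algebra.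
From mathcomp Require Import reals complex.
From mathcomp Require Import ring.
Import Order.TTheory GRing.Theory Num.Theory.
Local Open Scope ring_scope.
Set Implicit Arguments. Unset Strict Implicit.

Lemma frac_repr (R : idomainType) (f : {fraction R}) :
  exists p q, q != 0 /\ f * FracField.tofrac q = FracField.tofrac p.
Proof.
elim/quotW: f => x.
exists (x.1), (x.2); split; first exact: denom_ratioP.
unlock FracField.tofrac.
rewrite /= -[_ * _]/(FracField.mul _ _) -FracField.pi_mul.
apply/(@eqP (FracField.type R)).
change (FracField.mulf x (Ratio x.2 1) == Ratio x.1 1 %[mod FracField.type R])%qT.
rewrite FracField.equivf_def.
rewrite /FracField.mulf /= !numden_Ratio ?oner_neq0 ?mulf_neq0 ?oner_neq0 ?denom_ratioP //.
by rewrite !mulr1 mulrC.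
Qed.

Section DerivLemmas.
Variables (K : fieldType) (D : K -> K) (hD : derivation D).

Lemma DD a b : D (a + b) = D a + D b. Proof. exact: hD.1. Qed.
Lemma DM a b : D (a * b) = D a * b + a * D b. Proof. exact: hD.2. Qed.
Lemma D0 : D 0 = 0.
Proof. by apply: (addrI (D 0)); rewrite -DD !addr0. Qed.
Lemma DN a : D (- a) = - D a.
Proof. apply/eqP; rewrite -subr_eq0 opprK -DD addNr D0 //. Qed.
Lemma DB a b : D (a - b) = D a - D b.
Proof. by rewrite DD DN. Qed.
Lemma D1 : D 1 = 0.
Proof. have := DM 1 1; rewrite !mulr1 mul1r => H. by apply: (addrI (D 1)); rewrite addr0 -H. Qed.
Lemma DV a : a != 0 -> D (a^-1) = - D a / (a * a).
Proof.
move=> a0; have := DM a a^-1; rewrite mulfV // D1 => /esym H.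
have -> : D a^-1 = (a * D a^-1) / a by field.
have -> : a * D a^-1 = - (D a * a^-1) by rewrite -[X in X = _]subr0 -H; ring.
by field.
Qed.
Lemma DMc c a : D c = 0 -> D (c * a) = c * D a.
Proof. by move=> h; rewrite DM h mul0r add0r. Qed.
End DerivLemmas.

Lemma Dimage (C : idomainType) (K : fieldType) (D : K -> K)
    (iota : {rmorphism ratfun C -> K}) :
  diff_ext_of_ratfun D iota -> forall f, exists g, D (iota f) = iota g.
Proof.
move=> [hD [hc hX]].
have hX' : D (iota (FracField.tofrac 'X)) = 1 := hX.
have hpoly : forall p : {poly C}, exists g, D (iota (FracField.tofrac p)) = iota g.
  elim/poly_ind => [|p c [g IH]].
    by exists 0; rewrite !rmorph0 (D0 hD).
  exists (g * FracField.tofrac 'X + FracField.tofrac p).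
  rewrite rmorphD rmorphM !rmorphD !rmorphM /= (DD hD) (DM hD) IH hX'.
  have -> : D (iota (FracField.tofrac c%:P)) = 0 := hc c.
  by rewrite mulr1 addr0.
move=> f; have [p [q [q0 hf]]] := frac_repr f.
have [gp hp] := hpoly p; have [gq hq] := hpoly q.
have qF0 : FracField.tofrac q != 0 by rewrite tofrac_eq0.
have ef : f = FracField.tofrac p / FracField.tofrac q.
  by rewrite -hf mulfK.
have iq0 : iota (FracField.tofrac q) != 0 by rewrite fmorph_eq0.
exists (gp / FracField.tofrac q - FracField.tofrac p * gq /
        (FracField.tofrac q * FracField.tofrac q)).
rewrite ef rmorphM fmorphV (DM hD) (DV hD) // hp hq.
rewrite rmorphB !rmorphM !fmorphV !rmorphM /=.
by field.
Qed.
Section Sub.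
Variables (K : fieldType) (S : K -> Prop) (hS : is_subfield S).
Lemma S0 : S 0. Proof. by case: hS. Qed.
Lemma SB a b : S a -> S b -> S (a - b). Proof. by case: hS => _ [_ [h _]]; apply: h. Qed.
Lemma SM a b : S a -> S b -> S (a * b). Proof. by case: hS => _ [_ [_ [h _]]]; apply: h. Qed.
Lemma SV a : S a -> S (a^-1). Proof. by case: hS => _ [_ [_ [_ h]]]; apply: h. Qed.
Lemma SD a b : S a -> S b -> S (a + b).
Proof. move=> ha hb; have -> : a + b = a - (0 - b) by ring. by apply: SB => //; apply: SB => //; apply: S0. Qed.
End Sub.

Lemma PV_incl (C : idomainType) (K : fieldType) (D : K -> K)
    (iota : ratfun C -> K) (hD : derivation D)
    (V U W mu m1 : K) (fW : ratfun C) (fm : ratfun C)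
    (hW : iota fW = W) (hm : iota fm = m1 - mu) (hmu0 : m1 - mu != 0)
    (Dmu : D mu = 0) (Dm1 : D m1 = 0)
    (hU : U = m1 + W * W + D W) (hV : V = m1 + W * W - D W) :
  forall a, PV_field D iota U mu a -> PV_field D iota V mu a.
Proof.
move=> a H S hS HA; apply: H => // b [[f ->]|[z [hz hb]]].
  by apply: HA; left; exists f.
have e3 : D (D z) = U * z - mu * z.
  by move: hz; rewrite /schrod_sol => hz; apply/eqP; rewrite -subr_eq0; rewrite -hz; apply/eqP; ring.
set y := D z - W * z.
have e1 : D y = D (D z) - (D W * z + W * D z) by rewrite /y (DB hD) (DM hD).
have DU : D U = 2%:R * W * D W + D (D W).
  by rewrite hU !(DD hD) Dm1 (DM hD) add0r; ring.
have e4 : D (D (D z)) = D U * z + U * D z - mu * D z.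
  by rewrite e3 (DB hD) (DM hD) (DMc hD _ Dmu).
have ysol : schrod_sol D V mu y.
  rewrite /schrod_sol e1 (DB hD) (DD hD) !(DM hD) e4 DU e3 /y hV hU; ring.
have Sy : S y by apply: HA; right; exists y; split => //; left.
have SDy : S (D y) by apply: HA; right; exists y; split => //; right.
have SW : S W by apply: HA; left; exists fW.
have Sm : S (m1 - mu) by apply: HA; left; exists fm.
have ez : z = (D y + W * y) / (m1 - mu).
  have key : D y + W * y = (m1 - mu) * z by rewrite e1 e3 /y hU; ring.
  by rewrite key; field.
have Sz : S z.
  by rewrite ez; apply: (SM hS); [apply: (SD hS) => //; apply: (SM hS) | apply: (SV hS)].
case: hb => ->; first exact: Sz.
have -> : D z = y + W * z by rewrite /y; ring.
by apply: (SD hS) => //; apply: (SM hS).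
Qed.
Unset Implicit Arguments. Set Strict Implicit.
Theorem corollary2p2p14 (R : realType) (K : fieldType) (D : K -> K)
    (iota : {rmorphism ratfun (R[i]) -> K})
    (hext : diff_ext_of_ratfun D iota)
    (hconst : constants_are_C D iota)
    (Vm : ratfun (R[i])) (lam1 : R[i]) (Psi1 : K)
    (hPsi1 : Psi1 != 0)
    (hsol : schrod_sol D (iota Vm) (iota (ratC lam1)) Psi1)
    (halg : algebraic_over_ratfun iota (- (D Psi1 / Psi1)))
    (hfund : forall lam : R[i], lam != lam1 ->
               has_fundamental_system D (iota Vm) (iota (ratC lam))) :
  let W := - (D Psi1 / Psi1) in
  let Vp := iota Vm - 2%:R * D (D Psi1 / Psi1) in
  (exists f : ratfun (R[i]), iota f = W) <->
  ((exists g : ratfun (R[i]), iota g = Vp) /\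
   forall lam : R[i], lam != lam1 ->
     forall a : K, PV_field D iota (iota Vm) (iota (ratC lam)) a <->
                   PV_field D iota Vp (iota (ratC lam)) a).
Proof.
move=> W Vp.
have [hD [hc hX]] := hext.
have Dim := Dimage hext.
set m1 := iota (ratC lam1).
set Vm' := iota Vm.
have eDP : D Psi1 / Psi1 = - W by rewrite /W opprK.
have eVp : Vp = Vm' + 2%:R * D W by rewrite /Vp eDP (DN hD); ring.
have DDP : D (D Psi1) = Vm' * Psi1 - m1 * Psi1.
  by move: hsol; rewrite /schrod_sol => h; apply/eqP; rewrite -subr_eq0 -h; apply/eqP; ring.
have ric : D W = W * W - (Vm' - m1).
  rewrite /W (DN hD) (DM hD) (DV hD) // DDP; field => //.
have hVm : Vm' = m1 + W * W - D W by rewrite ric; ring.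
have hVp : Vp = m1 + W * W + D W by rewrite eVp ric; ring.
have two0 : (2%:R : K) != 0.
  rewrite -(rmorph_nat iota) fmorph_eq0 -(rmorph_nat (@FracField.tofrac _)) tofrac_eq0.
  by rewrite -polyC_natr polyC_eq0 pnatr_eq0.
have Dm1 : D m1 = 0 := hc lam1.
split.
- move=> [f hf].
  have [h hh] := Dim f.
  split.
    exists (Vm + 2%:R * h); rewrite eVp rmorphD rmorphM rmorph_nat -hh hf //.
  move=> lam hlam.
  set mu := iota (ratC lam).
  have Dmu : D mu = 0 := hc lam.
  have hmu0 : m1 - mu != 0.
    rewrite subr_eq0 /m1 /mu (inj_eq (fmorph_inj iota)) /ratC tofrac_eq.
    by rewrite (inj_eq polyC_inj) eq_sym.
  have hm : iota (ratC lam1 - ratC lam) = m1 - mu by rewrite rmorphB.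
  move=> a; split.
    apply: (PV_incl (W := - W) (m1 := m1) (mu := mu) (fW := - f) (fm := ratC lam1 - ratC lam) hD) => //.
    + by rewrite rmorphN hf.
    + by rewrite (DN hD) hVm; ring.
    + by rewrite (DN hD) hVp; ring.
  by apply: (PV_incl (W := W) (m1 := m1) (mu := mu) (fW := f) (fm := ratC lam1 - ratC lam) hD).
- move=> [[g hg] _].
  set s := (g - Vm) / 2%:R.
  have hs : D W = iota s.
    rewrite /s rmorphM fmorphV rmorphB rmorph_nat hg -/Vm' hVp hVm; field => //.
  set r := Vm - ratC lam1 + s.
  have hr : W * W = iota r.
    rewrite /r !rmorphD rmorphN -/Vm' -/m1 -hs ric; ring.
  have [r' hr'] := Dim r.
  have DWW : D (W * W) = 2%:R * W * D W by rewrite (DM hD); ring.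
  case: (eqVneq (D W) 0) => h0.
    by have [c ->] := hconst W h0; exists (ratC c).
  exists (r' / (2%:R * s)).
  rewrite rmorphM fmorphV rmorphM rmorph_nat -hs -hr' -hr DWW; field.
  by rewrite two0 h0.
Qed.
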